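(* Let $\nu\ge0$, $\omega_{av}(0)\in\mathbb{R}$, $v_c(0)\in\mathbb{C}$ with $v_c(0)\ne-1$, and $\omega_{-1}(0)\in\mathbb{C}\setminus\{0\}$, and let $(\omega_{-1}(t),v_c(t),\omega_{av}(t))$ solve $$\frac{d\omega_{-1}}{dt}=(\mathrm{i}\omega_{av}-\nu)\omega_{-1}+\frac{2\omega_{-1}^2}{1+v_c},\qquad\frac{dv_c}{dt}=\omega_{-1},\qquad\frac{d\omega_{av}}{dt}=-\nu\omega_{av}$$ on a time interval $I\ni 0$. Then the trajectory $\{v_c(t):t\in I\}$ is contained in a circle or a straight line in $\mathbb{C}$. More precisely, when $\omega_{av}(0)=0$, one has $v_c(t)=\frac{v_c(0)+1}{1-\Omega\theta(t)}-1$ with $\Omega=\frac{\omega_{-1}(0)}{1+v_c(0)}$ and $\theta(t)=\frac{1-e^{-\nu t}}{\nu}$ ($\theta(t)=t$ if $\nu=0$), and the trajectory lies on a circle if $\mathrm{Im}\,\Omega\ne0$ and on a straight line if $\mathrm{Im}\,\Omega=0$.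
   Context: These are the pole dynamics equations for the generalized Constantin–Lax–Majda equation with $a=0$, $\sigma=0$ on the circle, for a solution $\tilde\omega=\omega_++\omega_-+\omega_{av}$ with $\omega_-(x,t)=\omega_{-1}(t)\left[\frac{1}{\tan(x/2)-\mathrm{i}v_c(t)}-\frac{1}{-\mathrm{i}-\mathrm{i}v_c(t)}\right]$ and $\omega_+(x,t)=\overline{\omega_-(\bar x,t)}$. *)

(* Defs.v *)
From Stdlib Require Import Reals.
From Coquelicot Require Import Coquelicot.
Open Scope R_scope.

Definition theta (nu t : R) : R :=
  if Req_EM_T nu 0 then t else (1 - exp (- nu * t)) / nu.

Definition in_interval (a b : Rbar) (t : R) : Prop :=
  Rbar_lt a t /\ Rbar_lt t b.

Definition on_circle (S : R -> Prop) (f : R -> C) : Prop :=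
  exists (c : C) (r : R), 0 < r /\ forall t, S t -> Cmod (f t - c) = r.

Definition on_line (S : R -> Prop) (f : R -> C) : Prop :=
  exists (p d : C), d <> 0%C /\
    forall t, S t -> exists s : R, f t = (p + RtoC s * d)%C.

(* Main.v *)
Require Import Defs.
From Stdlib Require Import Reals Lra.
From Coquelicot Require Import Coquelicot.
Open Scope R_scope.

Lemma D_fst (f : R -> C) x l : is_derive f x l -> is_derive (fun t => fst (f t)) x (fst l).
Proof.
  intros H. unfold is_derive in *.
  exact (filterdiff_comp _ _ _ _ H (filterdiff_linear _ is_linear_fst)).
Qed.
Lemma D_snd (f : R -> C) x l : is_derive f x l -> is_derive (fun t => snd (f t)) x (snd l).
Proof.
  intros H. unfold is_derive in *.
  exact (filterdiff_comp _ _ _ _ H (filterdiff_linear _ is_linear_snd)).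
Qed.
Lemma D_pair (f : R -> C) x l1 l2 :
  is_derive (fun t => fst (f t)) x l1 -> is_derive (fun t => snd (f t)) x l2 ->
  is_derive f x (l1, l2).
Proof.
  intros H1 H2. unfold is_derive in *.
  apply (filterdiff_ext (fun t => (fst (f t), snd (f t)))).
  { intros y; destruct (f y); reflexivity. }
  refine (filterdiff_ext_lin _ _ _ (filterdiff_comp'_2 (fun t => fst (f t)) (fun t => snd (f t)) (fun a b => (a,b)) x
       _ _ (fun a b => (a,b)) H1 H2 _) _).
  - apply (filterdiff_ext_lin _ (fun t => t)).
    + apply filterdiff_ext with (fun t => t). intros [? ?]; reflexivity.
      apply filterdiff_id.
    + intros [? ?]; reflexivity.
  - intros y. reflexivity.
Qed.

Ltac subst_der :=
  repeat match goal with
  | H : is_derive ?f ?x ?l |- context [Derive ?g ?x] =>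
      rewrite (is_derive_unique g x l H)
  end.
Ltac exder :=
  repeat match goal with
  | |- _ /\ _ => split
  | |- True => exact I
  | H : is_derive ?f ?x ?l |- ex_derive ?g ?x => exists l; exact H
  end.

Lemma Cnz (z : C) : z <> 0%C -> fst z ^ 2 + snd z ^ 2 <> 0.
Proof.
  intros H E. apply H. destruct z as [z1 z2]; simpl in *.
  assert (z1 = 0) by nra. assert (z2 = 0) by nra. subst. reflexivity.
Qed.

Lemma RD_eq (f : R -> R) x a b : is_derive f x a -> a = b -> is_derive f x b.
Proof. intros; subst; auto. Qed.

Lemma R_plus (f g : R -> R) x a b : is_derive f x a -> is_derive g x b ->
  is_derive (fun t => f t + g t) x (a + b).
Proof. intros. auto_derive; exder; subst_der; ring. Qed.
Lemma R_opp (f : R -> R) x a : is_derive f x a ->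
  is_derive (fun t => - f t) x (- a).
Proof. intros. auto_derive; exder; subst_der; ring. Qed.
Lemma R_mult (f g : R -> R) x a b : is_derive f x a -> is_derive g x b ->
  is_derive (fun t => f t * g t) x (a * g x + f x * b).
Proof. intros. auto_derive; exder; subst_der; ring. Qed.
Lemma R_const (c : R) x : is_derive (fun _ => c) x 0.
Proof. auto_derive; exder; ring. Qed.
Lemma R_inv1 (f g : R -> R) x a b : is_derive f x a -> is_derive g x b ->
  f x ^ 2 + g x ^ 2 <> 0 ->
  is_derive (fun t => f t / (f t ^ 2 + g t ^ 2)) x
    ((a * (f x ^ 2 + g x ^ 2) - f x * (2 * f x * a + 2 * g x * b)) / (f x ^ 2 + g x ^ 2) ^ 2).
Proof. intros. auto_derive; exder. simpl. rewrite !Rmult_1_r. rewrite <- !Rsqr_pow2 in *. exact H1.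
  subst_der. field. rewrite <- !Rsqr_pow2 in *. exact H1. Qed.

Ltac toR := match goal with |- @eq _ ?x ?y => change (@eq R x y) end.
Ltac Rring := toR; ring.
Ltac comps H := let H1 := fresh H "1" in let H2 := fresh H "2" in
  pose proof (D_fst _ _ _ H) as H1; pose proof (D_snd _ _ _ H) as H2; simpl in H1, H2.

Lemma Dc_plus (f g : R -> C) x a b : is_derive f x a -> is_derive g x b ->
  is_derive (fun t => f t + g t)%C x (a + b)%C.
Proof.
  intros Ha Hb. comps Ha. comps Hb.
  apply D_pair; simpl.
  - exact (R_plus (fun t => fst (f t)) (fun t => fst (g t)) _ _ _ Ha1 Hb1).
  - exact (R_plus (fun t => snd (f t)) (fun t => snd (g t)) _ _ _ Ha2 Hb2).
Qed.
Lemma Dc_opp (f : R -> C) x a : is_derive f x a ->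
  is_derive (fun t => - f t)%C x (- a)%C.
Proof.
  intros Ha. comps Ha. apply D_pair; simpl.
  - exact (R_opp (fun t => fst (f t)) _ _ Ha1).
  - exact (R_opp (fun t => snd (f t)) _ _ Ha2).
Qed.
Lemma Dc_mult (f g : R -> C) x a b : is_derive f x a -> is_derive g x b ->
  is_derive (fun t => f t * g t)%C x (a * g x + f x * b)%C.
Proof.
  intros Ha Hb. comps Ha. comps Hb.
  apply D_pair; simpl.
  - refine (RD_eq _ _ _ _ (R_plus (fun t => fst (f t) * fst (g t)) (fun t => - (snd (f t) * snd (g t))) _ _ _
      (R_mult (fun t => fst (f t)) (fun t => fst (g t)) _ _ _ Ha1 Hb1)
      (R_opp (fun t => (snd (f t) * snd (g t))) _ _
        (R_mult (fun t => snd (f t)) (fun t => snd (g t)) _ _ _ Ha2 Hb2))) _).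
    Rring.
  - refine (RD_eq _ _ _ _ (R_plus (fun t => fst (f t) * snd (g t)) (fun t => (snd (f t) * fst (g t))) _ _ _
      (R_mult (fun t => fst (f t)) (fun t => snd (g t)) _ _ _ Ha1 Hb2)
      (R_mult (fun t => snd (f t)) (fun t => fst (g t)) _ _ _ Ha2 Hb1)) _).
    Rring.
Qed.
Lemma Dc_inv (f : R -> C) x a : is_derive f x a -> f x <> 0%C ->
  is_derive (fun t => / f t)%C x (- a / (f x * f x))%C.
Proof.
  intros Ha Hn. comps Ha. pose proof (Cnz _ Hn) as N.
  assert (N' : snd (f x) ^ 2 + fst (f x) ^ 2 <> 0) by (intro E; apply N; lra).
  apply D_pair; simpl.
  - refine (RD_eq _ _ _ _ (R_inv1 (fun t => fst (f t)) (fun t => snd (f t)) _ _ _ Ha1 Ha2 N) _).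
    set (f1 := fst (f x)) in *; set (f2 := snd (f x)) in *; set (a1 := fst a) in *; set (a2 := snd a) in *; toR; field.
    split; auto. intro E. apply N. nra.
  - refine (RD_eq _ _ _ _ (is_derive_ext (fun t => - (snd (f t) / (snd (f t) ^ 2 + fst (f t) ^ 2))) _ _ _ _
       (R_opp _ _ _ (R_inv1 (fun t => snd (f t)) (fun t => fst (f t)) _ _ _ Ha2 Ha1 N'))) _).
    { intros t. unfold Rdiv.
      replace (fst (f t) * (fst (f t) * 1) + snd (f t) * (snd (f t) * 1)) with (snd (f t) ^ 2 + fst (f t) ^ 2) by ring.
      toR; ring. }
    set (f1 := fst (f x)) in *; set (f2 := snd (f x)) in *; set (a1 := fst a) in *; set (a2 := snd a) in *; toR; field.
    split. intro E. apply N. nra. intro E; apply N; lra.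
Qed.
Lemma Dc_const (c : C) (x : R) : is_derive (fun _ : R => c) x (RtoC 0).
Proof. apply D_pair; simpl; apply R_const. Qed.
Lemma Dc_R (f : R -> R) x a : is_derive f x a -> is_derive (fun t => RtoC (f t)) x (RtoC a).
Proof. intros Ha. apply D_pair; simpl. exact Ha. apply R_const. Qed.
Lemma Dc_eq (f : R -> C) x a b : is_derive f x a -> a = b -> is_derive f x b.
Proof. intros; subst; auto. Qed.

Lemma interval_conv (a b : Rbar) t x : in_interval a b 0 -> in_interval a b t ->
  Rmin 0 t <= x <= Rmax 0 t -> in_interval a b x.
Proof.
  unfold in_interval, Rmin, Rmax. intros [H1 H2] [H3 H4] H5.
  destruct (Rle_dec 0 t); destruct a; destruct b; simpl in *; split; try lra; auto.
Qed.

Lemma const_R (a b : Rbar) (F : R -> R) : Rbar_lt a 0 -> Rbar_lt 0 b ->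
  (forall t, in_interval a b t -> is_derive F t 0) -> forall t, in_interval a b t -> F t = F 0.
Proof.
  intros Ha Hb HD t Ht.
  assert (H0 : in_interval a b 0) by (split; auto).
  destruct (MVT_gen F 0 t (fun _ => 0)) as [c [_ Hc]].
  - intros x Hx. apply HD. apply (interval_conv a b t x H0 Ht). simpl in Hx. lra.
  - intros x Hx. apply continuity_pt_filterlim.
    exact (ex_derive_continuous (K := R_AbsRing) (V := R_NormedModule) F x (ex_intro _ 0 (HD x (interval_conv a b t x H0 Ht Hx)))).
  - lra.
Qed.

Lemma const_C (a b : Rbar) (F : R -> C) : Rbar_lt a 0 -> Rbar_lt 0 b ->
  (forall t, in_interval a b t -> is_derive F t (RtoC 0)) -> forall t, in_interval a b t -> F t = F 0.
Proof.
  intros Ha Hb HD t Ht.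
  apply injective_projections.
  - apply (const_R a b (fun t => fst (F t))); auto. intros s Hs. exact (D_fst _ _ _ (HD s Hs)).
  - apply (const_R a b (fun t => snd (F t))); auto. intros s Hs. exact (D_snd _ _ _ (HD s Hs)).
Qed.

Definition nrm2 (z : C) := fst z ^ 2 + snd z ^ 2.

Lemma circ_of (S : R -> Prop) (f : R -> C) c r2 : 0 < r2 ->
  (forall t, S t -> nrm2 (f t - c) = r2) -> on_circle S f.
Proof.
  intros Hr H. exists c, (sqrt r2). split. apply sqrt_lt_R0; auto.
  intros t Ht. unfold Cmod. rewrite <- (H t Ht). reflexivity.
Qed.

Lemma circ_ext (S : R -> Prop) (f g : R -> C) : (forall t, S t -> f t = g t) ->
  on_circle S g -> on_circle S f.
Proof. intros E [c [r [Hr H]]]. exists c, r. split; auto. intros t Ht. rewrite E; auto. Qed.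
Lemma line_ext (S : R -> Prop) (f g : R -> C) : (forall t, S t -> f t = g t) ->
  on_line S g -> on_line S f.
Proof. intros E [p [d [Hd H]]]. exists p, d. split; auto. intros t Ht. rewrite E; auto. Qed.

Lemma G1 (S : R -> Prop) (p : R -> C) (c : C) r2 : 0 < r2 ->
  (forall t, S t -> p t <> RtoC 0 /\ nrm2 (p t - c) = r2) ->
  on_circle S (fun t => / p t - RtoC 1)%C \/ on_line S (fun t => / p t - RtoC 1)%C.
Proof.
  intros Hr H. destruct c as [c1 c2].
  set (K := c1 ^ 2 + c2 ^ 2 - r2).
  destruct (Req_dec K 0) as [HK | HK].
  - right.
    set (C2 := c1 ^ 2 + c2 ^ 2).
    assert (HC : C2 <> 0) by (unfold K, C2 in *; lra).
    exists (c1 / (2 * C2) - 1, - c2 / (2 * C2)), (c2 / C2, c1 / C2). split.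
    { intro E. injection E; intros E1 E2. apply HC. unfold C2.
      assert (c1 = 0). { apply (Rmult_eq_reg_r (/C2)). lra. apply Rinv_neq_0_compat; auto. }
      assert (c2 = 0). { apply (Rmult_eq_reg_r (/C2)). lra. apply Rinv_neq_0_compat; auto. }
      subst; ring. }
    intros t Ht. destruct (H t Ht) as [Hp Hc].
    pose proof (Cnz _ Hp) as Np. destruct (p t) as [z1 z2]. unfold nrm2 in Hc. simpl in Hc, Np.
    set (N := z1 ^ 2 + z2 ^ 2) in *.
    assert (HL : 2 * (c1 * z1 + c2 * z2) - N = 0) by (unfold N, K in *; nra).
    exists ((c2 * z1 - c1 * z2) / N).
    apply injective_projections; simpl.
    + assert (E : z1 / (z1 * (z1 * 1) + z2 * (z2 * 1)) + - 1 - (c1 / (2 * C2) - 1 + (c2 * z1 - c1 * z2) / N * (c2 / C2)) = c1 * (2 * (c1 * z1 + c2 * z2) - N) / (2 * C2 * N)).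
      { unfold N, C2 in *. field; repeat split; try assumption; try lra. }
      rewrite HL in E. unfold Rdiv at 4 in E. lra.
    + assert (E : - z2 / (z1 * (z1 * 1) + z2 * (z2 * 1)) + - 0 - (- c2 / (2 * C2) + (c2 * z1 - c1 * z2) / N * (c1 / C2)) = - c2 * (2 * (c1 * z1 + c2 * z2) - N) / (2 * C2 * N)).
      { unfold N, C2 in *. field; repeat split; try assumption; try lra. }
      rewrite HL in E. unfold Rdiv at 4 in E. lra.
  - left. apply (circ_of S _ (c1 / K - 1, - c2 / K) (r2 / K ^ 2)).
    { apply Rdiv_lt_0_compat; auto. apply pow2_gt_0; exact HK. }
    intros t Ht. destruct (H t Ht) as [Hp Hc].
    pose proof (Cnz _ Hp) as Np. destruct (p t) as [z1 z2]. unfold nrm2 in *. simpl in *.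
    unfold K. rewrite <- Hc. unfold K in HK. rewrite <- Hc in HK. field; repeat split; try assumption; intro E; apply HK; lra.
Qed.

Lemma G2 (S : R -> Prop) (u0 Om : C) (th : R -> R) : u0 <> RtoC 0 -> snd Om <> 0 ->
  (forall t, S t -> (RtoC 1 - Om * RtoC (th t))%C <> RtoC 0) ->
  on_circle S (fun t => u0 / (RtoC 1 - Om * RtoC (th t)) - RtoC 1)%C.
Proof.
  intros Hu Hb H. pose proof (Cnz _ Hu) as Nu.
  destruct u0 as [x y], Om as [al be]. simpl in Hb, Nu.
  apply (circ_of S _ ((x, y) * ((/ 2)%R, (al / (2 * be))%R) - RtoC 1)%C
    (nrm2 (x, y) * ((al ^ 2 + be ^ 2) / (4 * be ^ 2)))).
  { unfold nrm2; simpl. apply Rmult_lt_0_compat.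
    - assert (0 <= x * (x * 1)) by nra. assert (0 <= y * (y * 1)) by nra. lra.
    - apply Rdiv_lt_0_compat. assert (0 < be ^ 2) by (apply pow2_gt_0; auto). nra.
      assert (0 < be ^ 2) by (apply pow2_gt_0; auto). lra. }
  intros t Ht. pose proof (Cnz _ (H t Ht)) as N. simpl in N.
  unfold nrm2. simpl. field. split; auto. intro E; apply N; nra.
Qed.

Lemma G3 (S : R -> Prop) (u0 Om : C) (th : R -> R) : u0 <> RtoC 0 -> snd Om = 0 ->
  (forall t, S t -> (RtoC 1 - Om * RtoC (th t))%C <> RtoC 0) ->
  on_line S (fun t => u0 / (RtoC 1 - Om * RtoC (th t)) - RtoC 1)%C.
Proof.
  intros Hu Hb H.
  destruct Om as [al be]. simpl in Hb. subst be.
  exists (RtoC (-1)), u0. split; auto.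
  intros t Ht. pose proof (Cnz _ (H t Ht)) as N. simpl in N.
  exists (/ (1 - al * th t)). destruct u0 as [x y].
  apply injective_projections; simpl; field; intro E; apply N; nra.
Qed.

Lemma RtoC_mult' x y : RtoC (x * y) = (RtoC x * RtoC y)%C.
Proof. apply injective_projections; simpl; ring. Qed.
Lemma RtoC_opp' x : RtoC (- x) = (- RtoC x)%C.
Proof. apply injective_projections; simpl; ring. Qed.
Lemma CiCi : (Ci * Ci + RtoC 1)%C = RtoC 0.
Proof. apply injective_projections; simpl; ring. Qed.
Lemma C10 : RtoC 1 <> RtoC 0.
Proof. intro E. injection E. lra. Qed.

Lemma D_expnu nu t : is_derive (fun s => exp (nu * s)) t (nu * exp (nu * t)).
Proof. auto_derive; auto. ring. Qed.

Lemma theta0 nu : theta nu 0 = 0.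
Proof. unfold theta. destruct (Req_EM_T nu 0); auto. rewrite Rmult_0_r, exp_0. field; auto. Qed.

Lemma D_theta nu t : is_derive (theta nu) t (exp (- nu * t)).
Proof.
  unfold theta. destruct (Req_EM_T nu 0) as [E|E].
  - subst. replace (- 0 * t) with 0 by ring. rewrite exp_0. auto_derive; auto.
  - auto_derive; auto. field. auto.
Qed.

Lemma R_Nconst (f1 f2 g : R -> R) nu x :
  is_derive f1 x (- g x * f2 x - nu * f1 x) -> is_derive f2 x (g x * f1 x - nu * f2 x) ->
  is_derive g x (- nu * g x) -> g x <> 0 ->
  is_derive (fun t => (f1 t ^ 2 + f2 t ^ 2) / (g t ^ 2)) x 0.
Proof.
  intros H1 H2 H3 Hg. auto_derive; exder. simpl. rewrite Rmult_1_r. intro E; apply Hg.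
  nra. subst_der. field. auto.
Qed.

Ltac toC := match goal with |- @eq _ ?x ?y => change (@eq C x y) end.

Theorem mainTheorem14
  (nu : R) (a b : Rbar) (w v : R -> C) (wav : R -> R) :
  0 <= nu ->
  Rbar_lt a 0 -> Rbar_lt 0 b ->
  v 0 <> (- RtoC 1)%C ->
  w 0 <> 0%C ->
  (forall t, in_interval a b t -> v t <> (- RtoC 1)%C) ->
  (forall t, in_interval a b t ->
     is_derive w t
       ((Ci * RtoC (wav t) - RtoC nu) * w t
        + RtoC 2 * (w t * w t) / (RtoC 1 + v t))%C) ->
  (forall t, in_interval a b t -> is_derive v t (w t)) ->
  (forall t, in_interval a b t -> is_derive wav t (- nu * wav t)) ->
  (on_circle (in_interval a b) v \/ on_line (in_interval a b) v) /\
  (wav 0 = 0 ->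
    let Omega := (w 0 / (RtoC 1 + v 0))%C in
    (forall t, in_interval a b t ->
       v t = ((v 0 + RtoC 1) / (RtoC 1 - Omega * RtoC (theta nu t)) - RtoC 1)%C) /\
    (Im Omega <> 0 -> on_circle (in_interval a b) v) /\
    (Im Omega = 0 -> on_line (in_interval a b) v)).
Proof.
  intros Hnu Ha Hb Hv0 Hw0 Hv Dw Dv Dm.
  assert (H0 : in_interval a b 0) by (split; auto).
  assert (Hm : forall t, in_interval a b t -> wav t = wav 0 * exp (- nu * t)).
  { assert (K : forall t, in_interval a b t -> wav t * exp (nu * t) = wav 0 * exp (nu * 0)).
    { apply (const_R a b (fun t => wav t * exp (nu * t))); auto. intros t Ht.
      refine (RD_eq _ _ _ _ (R_mult _ _ _ _ _ (Dm t Ht) (D_expnu nu t)) _). toR; ring. }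
    intros t Ht. specialize (K t Ht). rewrite Rmult_0_r, exp_0, Rmult_1_r in K.
    rewrite <- K. rewrite Rmult_assoc, <- exp_plus. replace (nu * t + - nu * t) with 0 by ring.
    rewrite exp_0; ring. }
  set (u := fun t => (RtoC 1 + v t)%C).
  assert (Hu : forall t, in_interval a b t -> u t <> RtoC 0).
  { intros t Ht E. apply (Hv t Ht).
    assert (X : v t = (u t - RtoC 1)%C) by (unfold u; ring). rewrite X, E. ring. }
  assert (Du : forall t, in_interval a b t -> is_derive u t (w t)).
  { intros t Ht. refine (Dc_eq _ _ _ _ (Dc_plus _ _ _ _ _ (Dc_const (RtoC 1) t) (Dv t Ht)) _). toC; ring. }
  set (p := fun t => (/ u t)%C).
  assert (Dp : forall t, in_interval a b t -> is_derive p t (- w t / (u t * u t))%C).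
  { intros t Ht. exact (Dc_inv _ _ _ (Du t Ht) (Hu t Ht)). }
  set (q := fun t => (w t * (p t * p t))%C).
  assert (Dq : forall t, in_interval a b t -> is_derive q t ((Ci * RtoC (wav t) - RtoC nu) * q t)%C).
  { intros t Ht. refine (Dc_eq _ _ _ _ (Dc_mult _ _ _ _ _ (Dw t Ht) (Dc_mult _ _ _ _ _ (Dp t Ht) (Dp t Ht))) _).
    pose proof (Hu t Ht). unfold q, p, u in *. toC; field. auto. }
  assert (Hpu : forall t, in_interval a b t -> (p t * u t)%C = RtoC 1).
  { intros t Ht. pose proof (Hu t Ht). unfold p. field. auto. }
  assert (Hq0 : q 0 <> RtoC 0).
  { intro E. apply Hw0. pose proof (Hu 0 H0).
    assert (X : w 0 = (q 0 * u 0 * u 0)%C) by (unfold q, p; field; auto).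
    rewrite X, E. ring. }
  assert (Hvp : forall t, in_interval a b t -> v t = (/ p t - RtoC 1)%C).
  { intros t Ht. pose proof (Hu t Ht). unfold p, u in *. field. auto. }
  destruct (Req_dec (wav 0) 0) as [Hw00 | Hw00].
  -
    assert (Hm0 : forall t, in_interval a b t -> wav t = 0).
    { intros t Ht. rewrite (Hm t Ht), Hw00. ring. }
    assert (Hq : forall t, in_interval a b t -> q t = (q 0 * RtoC (exp (- nu * t)))%C).
    { assert (K : forall t, in_interval a b t -> (q t * RtoC (exp (nu * t)))%C = (q 0 * RtoC (exp (nu * 0)))%C).
      { apply (const_C a b (fun t => q t * RtoC (exp (nu * t)))%C); auto. intros t Ht.
        refine (Dc_eq _ _ _ _ (Dc_mult _ _ _ _ _ (Dq t Ht) (Dc_R _ _ _ (D_expnu nu t))) _).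
        rewrite (Hm0 t Ht), RtoC_mult'. toC. ring. }
      intros t Ht. specialize (K t Ht). rewrite Rmult_0_r, exp_0 in K.
      replace (q t) with (q t * RtoC (exp (nu * t)) * RtoC (exp (- nu * t)))%C.
      rewrite K. toC; ring.
      rewrite <- Cmult_assoc, <- RtoC_mult', <- exp_plus. replace (nu * t + - nu * t) with 0 by ring. rewrite exp_0. toC; ring. }
    assert (Hp : forall t, in_interval a b t -> p t = (p 0 - q 0 * RtoC (theta nu t))%C).
    { assert (K : forall t, in_interval a b t -> (p t + q 0 * RtoC (theta nu t))%C = (p 0 + q 0 * RtoC (theta nu 0))%C).
      { apply (const_C a b (fun t => p t + q 0 * RtoC (theta nu t))%C); auto. intros t Ht.
        refine (Dc_eq _ _ _ _ (Dc_plus _ _ _ _ _ (Dp t Ht) (Dc_mult _ _ _ _ _ (Dc_const (q 0) t) (Dc_R _ _ _ (D_theta nu t)))) _).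
        pose proof (Hq t Ht) as E. 
        assert (X : (RtoC (exp (- nu * t))) = (q t / q 0)%C) by (rewrite E; toC; field; auto).
        rewrite X. pose proof (Hu t Ht). unfold q, p in *. toC. field. split; auto. }
      intros t Ht. specialize (K t Ht). rewrite theta0 in K.
      replace (p t) with (p t + q 0 * RtoC (theta nu t) - q 0 * RtoC (theta nu t))%C by (toC; ring).
      rewrite K. toC; ring. }
    set (Om := (w 0 / (RtoC 1 + v 0))%C).
    assert (HX : forall t, in_interval a b t -> (RtoC 1 - Om * RtoC (theta nu t))%C <> RtoC 0).
    { intros t Ht E. pose proof (Hpu t Ht) as P. rewrite (Hp t Ht) in P.
      pose proof (Hu 0 H0) as U0.
      assert (X : (p 0 - q 0 * RtoC (theta nu t))%C = ((RtoC 1 - Om * RtoC (theta nu t)) / u 0)%C).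
      { unfold q, p, Om, u in *. toC. field. auto. }
      rewrite X, E in P. apply C10. rewrite <- P. toC. field. auto. }
    assert (U0 : (v 0 + RtoC 1)%C <> RtoC 0).
    { intro E. apply (Hu 0 H0). unfold u. rewrite <- E. toC; ring. }
    assert (Hform : forall t, in_interval a b t ->
       v t = ((v 0 + RtoC 1) / (RtoC 1 - Om * RtoC (theta nu t)) - RtoC 1)%C).
    { intros t Ht. rewrite (Hvp t Ht), (Hp t Ht). pose proof (HX t Ht). pose proof (Hu 0 H0).
      unfold q, p, Om, u in *. toC. field. split. exact H1.
      intro E. apply H.
      assert (E' : (RtoC 1 + v 0 - w 0 * RtoC (theta nu t))%C = RtoC 0) by exact E.
      transitivity ((RtoC 1 + v 0 - w 0 * RtoC (theta nu t)) / (RtoC 1 + v 0))%C.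
      toC; field; exact H1. rewrite E'. toC; field; exact H1. }
    assert (Hc : Im Om <> 0 -> on_circle (in_interval a b) v).
    { intros HI. apply (circ_ext _ _ _ Hform). apply G2; auto. }
    assert (Hl : Im Om = 0 -> on_line (in_interval a b) v).
    { intros HI. apply (line_ext _ _ _ Hform). apply G3; auto. }
    split.
    + destruct (Req_dec (Im Om) 0); [right; auto | left; auto].
    + intros _ Omega. exact (conj Hform (conj Hc Hl)).
  - assert (Hmnz : forall t, in_interval a b t -> wav t <> 0).
    { intros t Ht. rewrite (Hm t Ht). apply Rmult_integral_contrapositive. split; auto.
      apply Rgt_not_eq. apply exp_pos. }
    set (cc := fun t => (p t - Ci * q t * / RtoC (wav t))%C).
    assert (Hc : forall t, in_interval a b t -> cc t = cc 0).
    { apply const_C; auto. intros t Ht.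
      assert (Rn : RtoC (wav t) <> RtoC 0) by (intro E; apply (Hmnz t Ht); injection E; auto).
      refine (Dc_eq _ _ _ _ (Dc_plus _ _ _ _ _ (Dp t Ht) (Dc_opp _ _ _
        (Dc_mult _ _ _ _ _ (Dc_mult _ _ _ _ _ (Dc_const Ci t) (Dq t Ht))
          (Dc_inv _ _ _ (Dc_R _ _ _ (Dm t Ht)) Rn)))) _).
      rewrite RtoC_mult', RtoC_opp'.
      transitivity (- ((Ci * Ci + RtoC 1) * q t))%C.
      { pose proof (Hu t Ht). unfold q, p in *. toC. field. split; auto. }
      rewrite CiCi. toC; ring. }
    set (Nf := fun t => (fst (q t) ^ 2 + snd (q t) ^ 2) / (wav t ^ 2)).
    assert (HN : forall t, in_interval a b t -> Nf t = Nf 0).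
    { apply const_R; auto. intros t Ht.
      pose proof (D_fst _ _ _ (Dq t Ht)) as Q1. pose proof (D_snd _ _ _ (Dq t Ht)) as Q2.
      apply (R_Nconst (fun t => fst (q t)) (fun t => snd (q t)) wav nu t).
      - refine (RD_eq _ _ _ _ Q1 _). simpl. toR; ring.
      - refine (RD_eq _ _ _ _ Q2 _). simpl. toR; ring.
      - exact (Dm t Ht).
      - exact (Hmnz t Ht). }
    assert (HNpos : 0 < Nf 0).
    { unfold Nf. pose proof (Cnz _ Hq0) as Z. apply Rdiv_lt_0_compat.
      assert (0 <= fst (q 0) ^ 2) by (apply pow2_ge_0). assert (0 <= snd (q 0) ^ 2) by (apply pow2_ge_0). lra.
      apply pow2_gt_0. auto. }
    assert (Hcirc : on_circle (in_interval a b) (fun t => / p t - RtoC 1)%C \/ on_line (in_interval a b) (fun t => / p t - RtoC 1)%C).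
    { apply (G1 _ p (cc 0) (Nf 0) HNpos). intros t Ht. split.
      - intro E. apply C10. rewrite <- (Hpu t Ht). rewrite E. toC; ring.
      - rewrite <- (Hc t Ht), <- (HN t Ht). unfold cc, Nf.
        pose proof (Hmnz t Ht) as Mz.
        destruct (q t) as [q1 q2]. unfold nrm2. simpl. toR. field. pose proof (Cnz _ (Hu t Ht)) as Uz. unfold u in Uz. simpl in Uz. split; auto. intro E0; apply Uz; nra. }
    split.
    + destruct Hcirc as [Hc1 | Hl1]; [left; exact (circ_ext _ _ _ Hvp Hc1) | right; exact (line_ext _ _ _ Hvp Hl1)].
    + intros E. exfalso. auto.
Qed.
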